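(* Let $M$ and $N$ be non-trivial $0$-left cancellative monoids with zero. If $M$ and $N$ both admit least common multiples (respectively, are both finitely aligned, respectively, are both strongly finitely aligned), then $M*_0N$ is a $0$-left cancellative monoid that admits least common multiples (respectively, is finitely aligned, respectively, is strongly finitely aligned).
   Context: A monoid with zero is non-trivial if $0\neq1$; $0$-left cancellative: $st=sr\neq0\Rightarrow t=r$. The $0$-free product $M*_0N$ is the coproduct in the category of monoids with zero (equivalently the Rees quotient of the free product $M*N$ by the ideal generated by the zeros of $M$ and $N$). A monoid $T$ with zero admits least common multiples if for all $s,t\in T$ there is $r\in T$ with $sT\cap tT=rT$. $T$ is finitely aligned if for all $s,t\in T$ there is a finite set $R\subseteq T$ with $sT\cap tT=\bigcup_{r\in R}rT$. $T$ is strongly finitely aligned if for all $s,t\in T$ there is a finite (possibly empty) $B\subseteq T\setminus\{0\}$ with $sT\cap tT=\bigcup_{b\in B}bT$ (interpreted as $\{0\}$ if $B=\emptyset$) and $bT\cap b'T=\{0\}$ for distinct $b,b'\in B$. *)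

(* Defs.v *)
From Stdlib Require Import List.
Import ListNotations.

Record monoid0 := Monoid0 {
  car :> Type;
  mul : car -> car -> car;
  one : car;
  zero : car;
  mulA : forall x y z, mul x (mul y z) = mul (mul x y) z;
  mul1l : forall x, mul one x = x;
  mul1r : forall x, mul x one = x;
  mul0l : forall x, mul zero x = zero;
  mul0r : forall x, mul x zero = zero
}.
Arguments mul {_} _ _.
Arguments one {_}.
Arguments zero {_}.

Record hom0 (M N : monoid0) := Hom0 {
  hfun :> M -> N;
  hmul : forall x y, hfun (mul x y) = mul (hfun x) (hfun y);
  hone : hfun one = one;
  hzero : hfun zero = zero
}.

Definition nontrivial (M : monoid0) : Prop := (zero : M) <> one.

Definition zero_left_cancellative (M : monoid0) : Prop :=
  forall s t r : M, mul s t = mul s r -> mul s t <> zero -> t = r.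

Definition in_rideal {M : monoid0} (s x : M) : Prop := exists y : M, x = mul s y.

Definition admits_lcm (M : monoid0) : Prop :=
  forall s t : M, exists r : M,
    forall x : M, (in_rideal s x /\ in_rideal t x) <-> in_rideal r x.

Definition finitely_aligned (M : monoid0) : Prop :=
  forall s t : M, exists R : list M,
    forall x : M, (in_rideal s x /\ in_rideal t x) <->
                  (exists r, In r R /\ in_rideal r x).

(** The union over the (finite, possibly empty) set B is read as {0} when B is
    empty; since 0 lies in every bT, "x = 0 \/ ..." expresses exactly this. *)
Definition strongly_finitely_aligned (M : monoid0) : Prop :=
  forall s t : M, exists B : list M,
    (forall b, In b B -> b <> zero) /\
    (forall x : M, (in_rideal s x /\ in_rideal t x) <->
                   (x = zero \/ exists b, In b B /\ in_rideal b x)) /\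
    (forall b b', In b B -> In b' B -> b <> b' ->
       forall x : M, in_rideal b x -> in_rideal b' x -> x = zero).

(** (P, iM, iN) is a coproduct of M and N in the category of monoids with zero;
    i.e. P is (up to isomorphism) the 0-free product M *_0 N. *)
Definition is_coproduct0 (M N P : monoid0) (iM : hom0 M P) (iN : hom0 N P) : Prop :=
  forall (Q : monoid0) (f : hom0 M Q) (g : hom0 N Q),
    (exists h : hom0 P Q, (forall m, h (iM m) = f m) /\ (forall n, h (iN n) = g n)) /\
    (forall h h' : hom0 P Q,
        (forall m, h (iM m) = f m) -> (forall n, h (iN n) = g n) ->
        (forall m, h' (iM m) = f m) -> (forall n, h' (iN n) = g n) ->
        forall p, h p = h' p).

(* Main.v *)
Require Import Defs.
From Stdlib Require Import List Classical ClassicalEpsilon FunctionalExtensionality ProofIrrelevance.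
Import ListNotations.

Definition dec (P : Prop) : {P} + {~ P} := excluded_middle_informative P.

Lemma sig_ext {A : Type} {Pr : A -> Prop} (x y : sig Pr) : proj1_sig x = proj1_sig y -> x = y.
Proof. destruct x as [x px], y as [y py]; simpl; intro E; subst. f_equal; apply proof_irrelevance. Qed.

Section Main.
Variables M N : monoid0.
Definition L : Type := (car M + car N)%type.
Definition side (c : L) : bool := match c with inl _ => true | inr _ => false end.
Definition okL (c : L) : Prop := match c with
  | inl a => a <> zero /\ a <> one | inr b => b <> zero /\ b <> one end.
Fixpoint red (l : list L) : Prop := match l with
  | [] => True
  | c :: l' => okL c /\ red l' /\ match l' with [] => True | d :: _ => side c <> side d end
  end.
Definition obind (f : list L -> option (list L)) (w : option (list L)) :=
  match w with None => None | Some l => f l end.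

Record sideT := mkSide {
  sX : monoid0;
  sinj : sX -> L;
  sprj : L -> option sX;
  sb : bool;
  Hpi : forall x, sprj (sinj x) = Some x;
  Hip : forall c x, sprj c = Some x -> c = sinj x;
  Hside : forall x, side (sinj x) = sb;
  Hnone : forall c, sprj c = None <-> side c <> sb;
  Hok : forall x, okL (sinj x) <-> (x <> zero /\ x <> one);
  Hnt : (zero : sX) <> one
}.

Definition actX (S : sideT) (a : sX S) (l : list L) : option (list L) :=
  if dec (a = zero) then None else if dec (a = one) then Some l else
  match l with
  | [] => Some [sinj S a]
  | c :: l' => match sprj S c with
     | Some b => if dec (mul a b = zero) then None
                 else if dec (mul a b = one) then Some l'
                 else Some (sinj S (mul a b) :: l')
     | None => Some (sinj S a :: l) end
  end.

Section G.
Variable S : sideT.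
Local Notation X := (sX S).
Local Notation inj := (sinj S).
Local Notation prj := (sprj S).

Lemma inj_inj (x y : X) : inj x = inj y -> x = y.
Proof. intro H. apply (f_equal prj) in H. rewrite !Hpi in H. congruence. Qed.

Lemma actX_zero (a : X) l : a = zero -> actX S a l = None.
Proof. intro H; unfold actX; destruct (dec (a = zero)); congruence. Qed.

Lemma actX_one l : actX S one l = Some l.
Proof. unfold actX. destruct (dec (one = zero)) as [H|H].
  - exfalso; apply (Hnt S); auto.
  - destruct (dec (@one X = one)); congruence. Qed.

Lemma actX_nil (a : X) : a <> zero -> a <> one -> actX S a [] = Some [inj a].
Proof. intros H0 H1; unfold actX; destruct (dec (a = zero)); try congruence;
  destruct (dec (a = one)); congruence. Qed.

Lemma actX_oth (a : X) c l : a <> zero -> a <> one -> prj c = None ->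
  actX S a (c :: l) = Some (inj a :: c :: l).
Proof. intros H0 H1 H2; unfold actX; destruct (dec (a = zero)); try congruence;
  destruct (dec (a = one)); try congruence; rewrite H2; reflexivity. Qed.

Lemma actX_s0 (a b : X) l : a <> zero -> a <> one -> mul a b = zero ->
  actX S a (inj b :: l) = None.
Proof. intros H0 H1 H2; unfold actX; destruct (dec (a = zero)); try congruence;
  destruct (dec (a = one)); try congruence; rewrite Hpi;
  destruct (dec (mul a b = zero)); congruence. Qed.

Lemma actX_s1 (a b : X) l : a <> zero -> a <> one -> mul a b <> zero -> mul a b = one ->
  actX S a (inj b :: l) = Some l.
Proof. intros H0 H1 H2 H3; unfold actX; destruct (dec (a = zero)); try congruence;
  destruct (dec (a = one)); try congruence; rewrite Hpi;
  destruct (dec (mul a b = zero)); try congruence;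
  destruct (dec (mul a b = one)); congruence. Qed.

Lemma actX_s2 (a b : X) l : a <> zero -> a <> one -> mul a b <> zero -> mul a b <> one ->
  actX S a (inj b :: l) = Some (inj (mul a b) :: l).
Proof. intros H0 H1 H2 H3; unfold actX; destruct (dec (a = zero)); try congruence;
  destruct (dec (a = one)); try congruence; rewrite Hpi;
  destruct (dec (mul a b = zero)); try congruence;
  destruct (dec (mul a b = one)); congruence. Qed.

Lemma red_tail_prj (b : X) l : red (inj b :: l) ->
  match l with [] => True | d :: _ => prj d = None end.
Proof. destruct l as [|d l]; simpl; auto. intros [_ [_ H]].
  apply Hnone. rewrite <- (Hside S b). auto. Qed.

Lemma actX_red (a : X) l l' : red l -> actX S a l = Some l' -> red l'.
Proof.
  intros Hl Ha.
  destruct (dec (a = zero)) as [H0|H0]. { rewrite actX_zero in Ha; congruence. }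
  destruct (dec (a = one)) as [H1|H1]. { subst; rewrite actX_one in Ha; congruence. }
  destruct l as [|c l].
  - rewrite actX_nil in Ha by auto. inversion Ha; subst. simpl. split; [apply Hok; auto|auto].
  - destruct (prj c) as [b|] eqn:Hc.
    + apply Hip in Hc; subst c.
      destruct (dec (mul a b = zero)). { rewrite actX_s0 in Ha; congruence. }
      destruct (dec (mul a b = one)).
      * rewrite actX_s1 in Ha by auto. inversion Ha; subst. apply Hl.
      * rewrite actX_s2 in Ha by auto. inversion Ha; subst. simpl in Hl |- *.
        destruct Hl as [_ [Hl1 Hl2]]. split; [apply Hok; auto|]. split; auto.
        destruct l as [|d l] ; auto. rewrite Hside. rewrite <- (Hside S b). auto.
    + rewrite actX_oth in Ha by auto. inversion Ha; subst.
      simpl. split; [apply Hok; auto|]. split; [exact Hl|].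
      rewrite Hside. apply Hnone in Hc. auto.
Qed.

Lemma actX_cons (a : X) l : red (inj a :: l) -> actX S a l = Some (inj a :: l).
Proof.
  intro H. pose proof H as H'. destruct H as [Hk _]. apply Hok in Hk. destruct Hk as [H0 H1].
  destruct l as [|c l].
  - apply actX_nil; auto.
  - apply red_tail_prj in H'. apply actX_oth; auto.
Qed.

Lemma red_swap_head (a b : X) l : red (inj b :: l) -> a <> zero -> a <> one -> red (inj a :: l).
Proof. simpl. intros [_ [H1 H2]] H3 H4. split; [apply Hok; auto|]. split; auto.
  destruct l; auto. rewrite Hside. rewrite <- (Hside S b). auto. Qed.

Lemma actX_mul (a a' : X) l : red l -> actX S (mul a a') l = obind (actX S a) (actX S a' l).
Proof.
  intros Hl.
  destruct (dec (a' = zero)) as [H0|H0].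
  { subst. rewrite mul0r. rewrite !actX_zero by reflexivity. reflexivity. }
  destruct (dec (a' = one)) as [H1|H1].
  { subst. rewrite mul1r, actX_one. reflexivity. }
  destruct (dec (a = zero)) as [H2|H2].
  { subst. rewrite mul0l, actX_zero by reflexivity. destruct (actX S a' l); simpl;
    try rewrite actX_zero; reflexivity. }
  destruct (dec (a = one)) as [H3|H3].
  { subst. rewrite mul1l. destruct (actX S a' l); simpl; try rewrite actX_one; reflexivity. }
  destruct l as [|c l].
  - rewrite (actX_nil a') by auto. simpl.
    destruct (dec (mul a a' = zero)) as [E0|E0].
    { rewrite actX_zero by auto. rewrite actX_s0 by auto. reflexivity. }
    destruct (dec (mul a a' = one)) as [E1|E1].
    { rewrite actX_s1 by auto. rewrite E1, actX_one. reflexivity. }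
    rewrite actX_s2 by auto. rewrite actX_nil by auto. reflexivity.
  - destruct (prj c) as [b|] eqn:Hc.
    + apply Hip in Hc; subst c.
      pose proof (red_tail_prj b l Hl) as Ht.
      assert (Hb : b <> zero /\ b <> one) by (apply Hok; apply Hl).
      destruct Hb as [Hb0 Hb1].
      assert (As : mul (mul a a') b = mul a (mul a' b)) by (symmetry; apply mulA).
      destruct (dec (mul a' b = zero)) as [B0|B0].
      * rewrite (actX_s0 a' b) by auto. simpl.
        destruct (dec (mul a a' = zero)) as [E0|E0].
        { rewrite actX_zero by auto. reflexivity. }
        destruct (dec (mul a a' = one)) as [E1|E1].
        { exfalso. apply Hb0. rewrite <- (mul1l _ b), <- E1, As, B0, mul0r. reflexivity. }
        apply actX_s0; auto. rewrite As, B0, mul0r. reflexivity.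
      * destruct (dec (mul a' b = one)) as [B1|B1].
        -- rewrite (actX_s1 a' b) by auto. simpl.
           rewrite (actX_cons a l) by exact (red_swap_head a b l Hl H2 H3).
           destruct (dec (mul a a' = zero)) as [E0|E0].
           { exfalso. apply H2. rewrite <- (mul1r _ a), <- B1, mulA, E0, mul0l. reflexivity. }
           destruct (dec (mul a a' = one)) as [E1|E1].
           { rewrite E1, actX_one. f_equal. f_equal. f_equal.
             rewrite <- (mul1r _ a), <- B1, mulA, E1, mul1l. reflexivity. }
           rewrite actX_s2 by (rewrite ?As, ?B1, ?mul1r; auto). rewrite As, B1, mul1r. reflexivity.
        -- rewrite (actX_s2 a' b) by auto. simpl.
           destruct (dec (mul a a' = zero)) as [E0|E0].
           { rewrite actX_zero by auto. symmetry. apply actX_s0; auto.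
             rewrite <- As, E0, mul0l. reflexivity. }
           destruct (dec (mul a a' = one)) as [E1|E1].
           { assert (Eb : mul a (mul a' b) = b) by (rewrite <- As, E1, mul1l; reflexivity).
             rewrite E1, actX_one. rewrite actX_s2 by (rewrite ?Eb; auto). rewrite Eb. reflexivity. }
           destruct (dec (mul a (mul a' b) = zero)) as [F0|F0].
           { rewrite actX_s0 by (rewrite ?As; auto). rewrite actX_s0 by auto. reflexivity. }
           destruct (dec (mul a (mul a' b) = one)) as [F1|F1].
           { rewrite actX_s1 by (rewrite ?As; auto). rewrite actX_s1 by auto. reflexivity. }
           rewrite actX_s2 by (rewrite ?As; auto). rewrite actX_s2 by auto. rewrite As. reflexivity.
    + rewrite (actX_oth a') by auto. simpl.
      destruct (dec (mul a a' = zero)) as [E0|E0].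
      { rewrite actX_zero by auto. rewrite actX_s0 by auto. reflexivity. }
      destruct (dec (mul a a' = one)) as [E1|E1].
      { rewrite actX_s1 by auto. rewrite E1, actX_one. reflexivity. }
      rewrite actX_s2 by auto. rewrite actX_oth by auto. reflexivity.
Qed.

Definition hdoth (k : list L) : Prop := match k with [] => True | d :: _ => prj d = None end.

Lemma actX_shape (a : X) k l : red k -> a <> zero -> a <> one -> actX S a k = Some l ->
  (l = inj a :: k /\ hdoth k) \/
  (exists b k1, k = inj b :: k1 /\ mul a b <> zero /\
     ((mul a b = one /\ l = k1) \/ (mul a b <> one /\ l = inj (mul a b) :: k1))).
Proof.
  intros Hk H0 H1 Ha. destruct k as [|c k].
  - rewrite actX_nil in Ha by auto. left. split; [congruence|exact I].
  - destruct (prj c) as [b|] eqn:Hc.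
    + apply Hip in Hc; subst c. right. exists b, k. split; auto.
      destruct (dec (mul a b = zero)). { rewrite actX_s0 in Ha by auto. congruence. }
      split; auto.
      destruct (dec (mul a b = one)).
      * left. rewrite actX_s1 in Ha by auto. split; congruence.
      * right. rewrite actX_s2 in Ha by auto. split; congruence.
    + left. rewrite actX_oth in Ha by auto. split; [congruence|exact Hc].
Qed.

Lemma actX_canc (zlc : zero_left_cancellative X) (a : X) k k' l :
  red k -> red k' -> actX S a k = Some l -> actX S a k' = Some l -> k = k'.
Proof.
  intros Hk Hk' Ha Ha'.
  destruct (dec (a = zero)) as [H0|H0]. { rewrite actX_zero in Ha; congruence. }
  destruct (dec (a = one)) as [H1|H1]. { subst; rewrite actX_one in Ha, Ha'; congruence. }
  assert (X1 : forall b k1 k0, red (inj b :: k1) -> k1 <> inj a :: k0).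
  { intros b k1 k0 Hr E. apply red_tail_prj in Hr. rewrite E in Hr. simpl in Hr.
    rewrite Hpi in Hr. discriminate. }
  assert (X2 : forall b, b <> one -> mul a b <> a).
  { intros b Hb E. apply Hb. symmetry. apply (zlc a one b).
    - rewrite mul1r. auto.
    - rewrite mul1r. auto. }
  destruct (actX_shape a k l Hk H0 H1 Ha) as [[E1 Hh]|[b [k1 [E1 [Eb0 Eb]]]]];
  destruct (actX_shape a k' l Hk' H0 H1 Ha') as [[E2 Hh']|[b' [k1' [E2 [Eb0' Eb']]]]].
  - subst l. congruence.
  - subst k'. destruct Eb' as [[Ebb El]|[Ebb El]]; subst l.
    + exfalso. apply (X1 b' k1' k Hk'). auto.
    + exfalso. inversion El. apply inj_inj in H2.
      assert (Hb' : b' <> zero /\ b' <> one) by (apply Hok; apply (proj1 Hk')).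
      apply (X2 b'); [apply Hb'|congruence].
  - subst k. destruct Eb as [[Ebb El]|[Ebb El]]; subst l.
    + exfalso. apply (X1 b k1 k' Hk). auto.
    + exfalso. inversion E2. apply inj_inj in H2.
      assert (Hb' : b <> zero /\ b <> one) by (apply Hok; apply (proj1 Hk)).
      apply (X2 b); [apply Hb'|congruence].
  - subst k k'.
    destruct Eb as [[Ebb El]|[Ebb El]]; destruct Eb' as [[Ebb' El']|[Ebb' El']]; subst l.
    + assert (b = b') by (apply (zlc a); congruence). congruence.
    + exfalso. pose proof (red_tail_prj b k1 Hk) as Ht. rewrite El' in Ht. simpl in Ht.
      rewrite Hpi in Ht. discriminate.
    + exfalso. pose proof (red_tail_prj b' k1' Hk') as Ht. rewrite <- El' in Ht. simpl in Ht.
      rewrite Hpi in Ht. discriminate.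
    + inversion El'. match goal with H : inj _ = inj _ |- _ => apply inj_inj in H end. assert (b = b') by (apply (zlc a); auto; congruence). congruence.
Qed.
End G.

Definition redw (w : option (list L)) : Prop := match w with None => True | Some l => red l end.
Definition RW := {w : option (list L) | redw w}.
Definition rnone : RW := exist _ None I.
Definition reps : RW := exist redw (Some []) I.
Definition Qcar := {f : RW -> RW | proj1_sig (f rnone) = None}.

Lemma Qext (f g : Qcar) : (forall p, proj1_sig (proj1_sig f p) = proj1_sig (proj1_sig g p)) -> f = g.
Proof. intro H. apply sig_ext. apply functional_extensionality. intro p. apply sig_ext. apply H. Qed.

Lemma Qnone (f : Qcar) : proj1_sig f rnone = rnone.
Proof. apply sig_ext. apply (proj2_sig f). Qed.

Definition mulQ (f g : Qcar) : Qcar.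
Proof. exists (fun p => proj1_sig f (proj1_sig g p)). rewrite Qnone. apply (proj2_sig f). Defined.
Definition oneQ : Qcar := exist _ (fun p => p) eq_refl.
Definition zeroQ : Qcar := exist (fun f : RW -> RW => proj1_sig (f rnone) = None) (fun _ => rnone) eq_refl.

Definition Q : monoid0.
Proof.
  refine (Monoid0 Qcar mulQ oneQ zeroQ _ _ _ _ _); intros; apply Qext; intros; simpl; auto.
  rewrite Qnone. reflexivity.
Defined.

Lemma obind_actX_red (S : sideT) (a : sX S) w : redw w -> redw (obind (actX S a) w).
Proof. destruct w as [l|]; simpl; auto. intro H. destruct (actX S a l) eqn:E; simpl; auto.
  eapply actX_red; eauto. Qed.

Definition actQ (S : sideT) (a : sX S) : Qcar :=
  exist (fun f : RW -> RW => proj1_sig (f rnone) = None)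
    (fun p => exist _ (obind (actX S a) (proj1_sig p)) (obind_actX_red S a _ (proj2_sig p))) eq_refl.

Definition homQ (S : sideT) : hom0 (sX S) Q.
Proof.
  refine (Hom0 (sX S) Q (actQ S) _ _ _).
  - intros x y. apply Qext. intros [w Hw]. simpl. destruct w as [l|]; simpl; auto.
    apply actX_mul. exact Hw.
  - apply Qext. intros [w Hw]. simpl. destruct w as [l|]; simpl; auto. apply actX_one.
  - apply Qext. intros [w Hw]. simpl. destruct w as [l|]; simpl; auto. apply actX_zero; auto.
Defined.

Definition prjM (c : L) : option M := match c with inl a => Some a | inr _ => None end.
Definition prjN (c : L) : option N := match c with inr a => Some a | inl _ => None end.

Definition sM (nt : nontrivial M) : sideT.
Proof.
  refine (mkSide M inl prjM true _ _ _ _ _ nt).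
  - reflexivity.
  - intros [a|a] x; simpl; congruence.
  - reflexivity.
  - intros [a|a]; simpl; split; congruence.
  - simpl. tauto.
Defined.
Definition sN (nt : nontrivial N) : sideT.
Proof.
  refine (mkSide N inr prjN false _ _ _ _ _ nt).
  - reflexivity.
  - intros [a|a] x; simpl; congruence.
  - reflexivity.
  - intros [a|a]; simpl; split; congruence.
  - simpl. tauto.
Defined.

Variable P : monoid0.
Variables (iM : hom0 M P) (iN : hom0 N P).
Variables (ntM : nontrivial M) (ntN : nontrivial N).
Hypothesis Hcop : is_coproduct0 M N P iM iN.

Definition iota (c : L) : P := match c with inl a => iM a | inr b => iN b end.
Definition eval (l : list L) : P := fold_right (fun c p => mul (iota c) p) one l.
Definition evalw (w : option (list L)) : P := match w with None => zero | Some l => eval l end.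
Definition actL (c : L) (l : list L) : option (list L) :=
  match c with inl a => actX (sM ntM) a l | inr b => actX (sN ntN) b l end.

Lemma evalE (S : sideT) (iX : hom0 (sX S) P) (Hi : forall x, iota (sinj S x) = iX x) a k :
  red k -> mul (iX a) (eval k) = evalw (actX S a k).
Proof.
  intro Hk.
  destruct (dec (a = zero)) as [H0|H0].
  { subst. rewrite actX_zero by auto. rewrite hzero, mul0l. reflexivity. }
  destruct (dec (a = one)) as [H1|H1].
  { subst. rewrite actX_one, hone, mul1l. reflexivity. }
  destruct k as [|c k].
  - rewrite actX_nil by auto. simpl. rewrite Hi. reflexivity.
  - destruct (sprj S c) as [b|] eqn:Hc.
    + apply Hip in Hc; subst c. simpl. rewrite Hi, mulA, <- hmul.
      destruct (dec (mul a b = zero)).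
      { rewrite actX_s0 by auto. simpl. rewrite e, hzero, mul0l. reflexivity. }
      destruct (dec (mul a b = one)).
      { rewrite actX_s1 by auto. simpl. rewrite e, hone, mul1l. reflexivity. }
      rewrite actX_s2 by auto. simpl. rewrite Hi. reflexivity.
    + rewrite actX_oth by auto. simpl. rewrite Hi. reflexivity.
Qed.

Lemma evalL c k : red k -> mul (iota c) (eval k) = evalw (actL c k).
Proof.
  destruct c as [a|a]; simpl.
  - apply (evalE (sM ntM) iM). reflexivity.
  - apply (evalE (sN ntN) iN). reflexivity.
Qed.

Lemma actL_red c k l : red k -> actL c k = Some l -> red l.
Proof. destruct c as [a|a]; simpl; apply actX_red. Qed.

Lemma actL_cons c l : red (c :: l) -> actL c l = Some (c :: l).
Proof. destruct c as [a|a]; simpl; intro H.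
  - apply (actX_cons (sM ntM)); exact H.
  - apply (actX_cons (sN ntN)); exact H. Qed.

Definition hQ : hom0 P Q :=
  proj1_sig (constructive_indefinite_description _ (proj1 (Hcop Q (homQ (sM ntM)) (homQ (sN ntN))))).

Lemma hQ_spec : (forall m, hQ (iM m) = homQ (sM ntM) m) /\ (forall n, hQ (iN n) = homQ (sN ntN) n).
Proof. unfold hQ. destruct (constructive_indefinite_description _ _) as [h Hh]. exact Hh. Qed.

Definition word (p : P) : option (list L) := proj1_sig (proj1_sig (hQ p) reps).

Lemma hQ_iota c p : proj1_sig (proj1_sig (hQ (iota c)) p) = obind (actL c) (proj1_sig p).
Proof. destruct c as [a|a]; simpl.
  - rewrite (proj1 hQ_spec). reflexivity.
  - rewrite (proj2 hQ_spec). reflexivity. Qed.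

Lemma word_eval l : red l -> word (eval l) = Some l.
Proof.
  induction l as [|c l IH]; intro Hl.
  - unfold word. simpl. rewrite hone. reflexivity.
  - unfold word in *. simpl. rewrite hmul. simpl. rewrite hQ_iota. rewrite IH by apply Hl.
    simpl. apply actL_cons. exact Hl.
Qed.

Lemma word_zero : word zero = None.
Proof. unfold word. rewrite hzero. reflexivity. Qed.

Lemma eval_nz l : red l -> eval l <> zero.
Proof. intros Hl E. pose proof (word_eval l Hl) as W. rewrite E, word_zero in W. discriminate. Qed.

Lemma eval_inj l k : red l -> red k -> eval l = eval k -> l = k.
Proof. intros Hl Hk E. pose proof (word_eval l Hl) as W1. pose proof (word_eval k Hk) as W2.
  rewrite E in W1. congruence. Qed.

Definition Spred (p : P) : Prop := p = zero \/ exists l, red l /\ p = eval l.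

Lemma Spred_iota c q : Spred q -> Spred (mul (iota c) q).
Proof.
  intros [E|[k [Hk E]]]; subst.
  - left. apply mul0r.
  - rewrite evalL by auto. destruct (actL c k) as [k'|] eqn:Ea; simpl.
    + right. exists k'. split; auto. eapply actL_red; eauto.
    + left; reflexivity.
Qed.

Lemma Spred_mul p q : Spred p -> Spred q -> Spred (mul p q).
Proof.
  intros [E|[l [Hl E]]] Hq; subst.
  - left. apply mul0l.
  - clear Hl. induction l as [|c l IH]; simpl.
    + rewrite mul1l. exact Hq.
    + rewrite <- mulA. apply Spred_iota. exact IH.
Qed.

Definition Scar := {p : P | Spred p}.
Definition mulS (x y : Scar) : Scar :=
  exist _ (mul (proj1_sig x) (proj1_sig y)) (Spred_mul _ _ (proj2_sig x) (proj2_sig y)).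
Definition oneS : Scar := exist Spred one (or_intror (ex_intro _ [] (conj I eq_refl))).
Definition zeroS : Scar := exist Spred zero (or_introl eq_refl).
Definition Smon : monoid0.
Proof.
  refine (Monoid0 Scar mulS oneS zeroS _ _ _ _ _); intros; apply sig_ext; simpl;
  auto using mulA, mul1l, mul1r, mul0l, mul0r.
Defined.

Lemma Spred_iota1 c : Spred (iota c).
Proof. rewrite <- (mul1r _ (iota c)). apply Spred_iota. right. exists []. split; simpl; auto. Qed.

Definition jM : hom0 M Smon.
Proof.
  refine (Hom0 M Smon (fun a => exist Spred (iM a) (Spred_iota1 (inl a))) _ _ _);
  intros; apply sig_ext; simpl; auto using hmul, hone, hzero.
Defined.
Definition jN : hom0 N Smon.
Proof.
  refine (Hom0 N Smon (fun a => exist Spred (iN a) (Spred_iota1 (inr a))) _ _ _);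
  intros; apply sig_ext; simpl; auto using hmul, hone, hzero.
Defined.

Lemma NF p : Spred p.
Proof.
  destruct (proj1 (Hcop Smon jM jN)) as [g [Hg1 Hg2]].
  assert (Hc : exists h : hom0 P P, forall p, h p = proj1_sig (g p)).
  { unshelve eexists (Hom0 P P (fun p => proj1_sig (g p)) _ _ _).
    - intros x y. cbv beta. rewrite (hmul _ _ g). reflexivity.
    - cbv beta. rewrite (hone _ _ g). reflexivity.
    - cbv beta. rewrite (hzero _ _ g). reflexivity.
    - reflexivity. }
  destruct Hc as [h Hh].
  pose (idh := Hom0 P P (fun p => p) (fun _ _ => eq_refl) eq_refl eq_refl).
  assert (E : h p = idh p).
  { apply (proj2 (Hcop P iM iN) h idh); intros; simpl; auto;
    rewrite Hh; [rewrite Hg1|rewrite Hg2]; reflexivity. }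
  rewrite Hh in E. simpl in E. rewrite <- E. apply proj2_sig.
Qed.

Lemma red_app_l l k : red (l ++ k) -> red l.
Proof.
  induction l as [|c l IH]; simpl; auto. intros [H1 [H2 H3]]. split; auto. split; auto.
  destruct l as [|d l]; auto.
Qed.

Lemma red_app_split l c k : red (l ++ c :: k) <-> red (l ++ [c]) /\ red (c :: k).
Proof.
  induction l as [|e l IH]; simpl.
  - split; [intros H; split; auto; split; [apply H|auto] | tauto].
  - rewrite IH. destruct l as [|f l]; simpl; tauto.
Qed.

Lemma red_snoc_ok l c : red (l ++ [c]) -> okL c.
Proof. intro H. rewrite <- (app_nil_r (l ++ [c])) in H. rewrite <- app_assoc in H.
  simpl in H. apply red_app_split in H. apply (proj1 (proj2 H)). Qed.

Lemma red_snoc_swap l c d : red (l ++ [c]) -> okL d -> side d = side c -> red (l ++ [d]).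
Proof.
  induction l as [|e l IH]; simpl; intros H Hd Hs.
  - tauto.
  - destruct H as [H1 [H2 H3]]. split; auto. split; auto.
    destruct l as [|f l]; simpl in *; auto. rewrite Hs. auto.
Qed.

Lemma eval_app l k : eval (l ++ k) = mul (eval l) (eval k).
Proof. induction l as [|c l IH]; simpl. - rewrite mul1l; auto. - rewrite IH, mulA; auto. Qed.

Lemma eval_snoc l c : eval (l ++ [c]) = mul (eval l) (iota c).
Proof. rewrite eval_app. simpl. rewrite mul1r. reflexivity. Qed.

Lemma eval_snoc_cons l c k : eval (l ++ c :: k) = mul (mul (eval l) (iota c)) (eval k).
Proof. rewrite eval_app. simpl. rewrite mulA. reflexivity. Qed.

Definition rin (s x : P) := in_rideal s x.
Definition unitX {X : monoid0} (a : X) : Prop := exists d, mul a d = one.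
Definition unitL (c : L) : Prop := match c with inl a => unitX a | inr a => unitX a end.
Definition ldiv (c c' : L) : Prop := match c, c' with
  | inl a, inl a' => exists m, a' = mul a m
  | inr a, inr a' => exists m, a' = mul a m
  | _, _ => False end.

Section GP.
Variable S : sideT.
Variable iX : hom0 (sX S) P.
Hypothesis Hi : forall x, iota (sinj S x) = iX x.
Local Notation inj := (sinj S).

Lemma divX l0 a : red (l0 ++ [inj a]) -> ~ unitX a -> forall y,
  mul (eval (l0 ++ [inj a])) y = zero \/
  exists m rest, red (l0 ++ inj (mul a m) :: rest) /\
     mul (eval (l0 ++ [inj a])) y = eval (l0 ++ inj (mul a m) :: rest).
Proof.
  intros Hr Hu y.
  assert (Ha : a <> zero /\ a <> one) by (apply Hok; eapply red_snoc_ok; eauto).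
  destruct Ha as [Ha0 Ha1].
  rewrite eval_snoc, Hi, <- mulA.
  destruct (NF y) as [E|[k [Hk E]]]; subst.
  { left. rewrite !mul0r. reflexivity. }
  rewrite (evalE S iX Hi a k Hk).
  destruct (actX S a k) as [l|] eqn:Ea; simpl.
  2: { left. apply mul0r. }
  destruct (actX_shape S a k l Hk Ha0 Ha1 Ea) as [[E1 Hh]|[b [k1 [E1 [Eb0 Eb]]]]].
  - right. exists one, k. rewrite mul1r. subst l.
    assert (Hr2 : red (l0 ++ inj a :: k)).
    { apply red_app_split. split; auto. simpl. split; [apply Hok; auto|]. split; auto.
      destruct k as [|d k]; auto. simpl in Hh. apply Hnone in Hh. rewrite Hside. auto. }
    split; auto. rewrite eval_app. reflexivity.
  - destruct Eb as [[Ebb El]|[Ebb El]].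
    + exfalso. apply Hu. exists b. auto.
    + right. exists b, k1. subst l. split.
      * apply red_app_split. split.
        -- apply (red_snoc_swap _ _ _ Hr). apply Hok. split; auto. rewrite !Hside; auto.
        -- eapply actX_red; eauto.
      * rewrite eval_app. reflexivity.
Qed.

Lemma Dnz l0 a : red (l0 ++ [inj a]) -> forall y, y <> zero -> mul (eval l0) (iX y) <> zero.
Proof.
  intros Hr y Hy.
  destruct (dec (y = one)) as [E|E].
  { subst. rewrite hone, mul1r. apply eval_nz. eapply red_app_l; eauto. }
  rewrite <- Hi, <- eval_snoc. apply eval_nz. apply (red_snoc_swap _ _ _ Hr).
  - apply Hok; auto.
  - rewrite !Hside; auto.
Qed.

Lemma rin_form l0 y x : rin (mul (eval l0) (iX y)) x -> exists z, x = mul (eval (l0 ++ [inj y])) z.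
Proof. intros [z E]. exists z. rewrite eval_snoc, Hi. auto. Qed.

Lemma Dextra l0 a : red (l0 ++ [inj a]) -> forall y y' x,
  rin (mul (eval l0) (iX y)) x -> rin (mul (eval l0) (iX y')) x -> x <> zero ->
  exists w, w <> zero /\ in_rideal y w /\ in_rideal y' w.
Proof.
  intros Hr y y' x H1 H2 Hx.
  assert (Hy : y <> zero).
  { intro E; subst. destruct H1 as [z E]. apply Hx. rewrite E, hzero, mul0r, mul0l. auto. }
  assert (Hy' : y' <> zero).
  { intro E; subst. destruct H2 as [z E]. apply Hx. rewrite E, hzero, mul0r, mul0l. auto. }
  destruct (classic (unitX y)) as [[e He]|Hu].
  { exists y'. split; auto. split.
    - exists (mul e y'). rewrite mulA, He, mul1l. auto.
    - exists one. rewrite mul1r. auto. }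
  destruct (classic (unitX y')) as [[e He]|Hu'].
  { exists y. split; auto. split.
    - exists one. rewrite mul1r. auto.
    - exists (mul e y). rewrite mulA, He, mul1l. auto. }
  assert (Hy1 : y <> one) by (intro E; apply Hu; exists one; subst; apply mul1l).
  assert (Hy1' : y' <> one) by (intro E; apply Hu'; exists one; subst; apply mul1l).
  assert (R1 : red (l0 ++ [inj y])) by (apply (red_snoc_swap _ _ _ Hr); [apply Hok; auto| rewrite !Hside; auto]).
  assert (R2 : red (l0 ++ [inj y'])) by (apply (red_snoc_swap _ _ _ Hr); [apply Hok; auto| rewrite !Hside; auto]).
  destruct (rin_form _ _ _ H1) as [z Ez]. destruct (rin_form _ _ _ H2) as [z' Ez'].
  destruct (divX l0 y R1 Hu z) as [Z|[m [rest [Rm Em]]]]. { congruence. }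
  destruct (divX l0 y' R2 Hu' z') as [Z|[m' [rest' [Rm' Em']]]]. { congruence. }
  assert (EE : l0 ++ inj (mul y m) :: rest = l0 ++ inj (mul y' m') :: rest').
  { apply eval_inj; auto. congruence. }
  apply app_inv_head in EE. inversion EE as [[E1 E2]]. apply inj_inj in E1.
  exists (mul y m). split.
  - apply red_app_split in Rm. destruct Rm as [_ [Ho _]]. apply Hok in Ho. apply Ho.
  - split; [exists m; auto | exists m'; auto].
Qed.

Lemma Dcase l0 a b : red (l0 ++ [inj a]) -> red (l0 ++ [inj b]) -> ~ unitX a -> ~ unitX b ->
  forall x, (rin (eval (l0 ++ [inj a])) x /\ rin (eval (l0 ++ [inj b])) x) <->
    exists y, in_rideal a y /\ in_rideal b y /\ rin (mul (eval l0) (iX y)) x.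
Proof.
  intros Ra Rb Ua Ub x. split.
  - intros [[z Ez] [z' Ez']].
    destruct (dec (x = zero)) as [X0|X0].
    { subst. exists zero. split; [exists zero; rewrite mul0r; auto|].
      split; [exists zero; rewrite mul0r; auto|]. exists zero. rewrite mul0r. auto. }
    destruct (divX l0 a Ra Ua z) as [Z|[m [rest [Rm Em]]]]. { congruence. }
    destruct (divX l0 b Rb Ub z') as [Z|[m' [rest' [Rm' Em']]]]. { congruence. }
    assert (EE : l0 ++ inj (mul a m) :: rest = l0 ++ inj (mul b m') :: rest').
    { apply eval_inj; auto. congruence. }
    apply app_inv_head in EE. inversion EE as [[E1 E2]]. apply inj_inj in E1.
    exists (mul a m). split; [exists m; auto|]. split; [exists m'; auto|].
    exists (eval rest). rewrite Ez, Em, eval_snoc_cons, Hi. reflexivity.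
  - intros [y [[m Em] [[m' Em'] [z Ez]]]]. subst x. split.
    + exists (mul (iX m) z). rewrite eval_snoc, Hi, Em, hmul, !mulA. reflexivity.
    + exists (mul (iX m') z). rewrite eval_snoc, Hi, Em', hmul, !mulA. reflexivity.
Qed.

Lemma cancX (zlc : zero_left_cancellative (sX S)) a u v :
  mul (iX a) u = mul (iX a) v -> mul (iX a) u <> zero -> u = v.
Proof.
  intros E Hn.
  destruct (NF u) as [U|[k [Hk U]]]. { subst. rewrite mul0r in Hn. congruence. }
  destruct (NF v) as [V|[k' [Hk' V]]]. { subst. rewrite E, mul0r in Hn. congruence. }
  subst. rewrite (evalE S iX Hi a k Hk) in E, Hn. rewrite (evalE S iX Hi a k' Hk') in E.
  destruct (actX S a k) as [l|] eqn:E1; simpl in *; [|congruence].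
  destruct (actX S a k') as [l'|] eqn:E2; simpl in *; [|congruence].
  assert (l = l') by (apply eval_inj; [exact (actX_red S a k l Hk E1)|exact (actX_red S a k' l' Hk' E2)|exact E]). subst.
  f_equal. exact (actX_canc S zlc a k k' l' Hk Hk' E1 E2).
Qed.

Section T.
Variables (l0 : list L) (a b : sX S).
Hypotheses (Ra : red (l0 ++ [inj a])) (Rb : red (l0 ++ [inj b])) (Ua : ~ unitX a) (Ub : ~ unitX b).
Definition ICd x := rin (eval (l0 ++ [inj a])) x /\ rin (eval (l0 ++ [inj b])) x.

Lemma Tlcm : admits_lcm (sX S) -> exists r, forall x, ICd x <-> rin r x.
Proof.
  intros H. destruct (H a b) as [r Hr]. exists (mul (eval l0) (iX r)). intro x.
  unfold ICd. rewrite (Dcase l0 a b Ra Rb Ua Ub). split.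
  - intros [y [H1 [H2 [z Ez]]]]. destruct (proj1 (Hr y) (conj H1 H2)) as [m Em]. subst.
    exists (mul (iX m) z). rewrite hmul, !mulA. reflexivity.
  - intro Hx. exists r. destruct (proj2 (Hr r)) as [H1 H2]. { exists one. rewrite mul1r; auto. }
    auto.
Qed.

Lemma Tfa : finitely_aligned (sX S) -> exists R, forall x, ICd x <-> exists r, In r R /\ rin r x.
Proof.
  intros H. destruct (H a b) as [R HR]. exists (map (fun r => mul (eval l0) (iX r)) R). intro x.
  unfold ICd. rewrite (Dcase l0 a b Ra Rb Ua Ub). split.
  - intros [y [H1 [H2 [z Ez]]]]. destruct (proj1 (HR y) (conj H1 H2)) as [r [Hin [m Em]]]. subst.
    exists (mul (eval l0) (iX r)). split; [apply (in_map (fun r => mul (eval l0) (iX r))); auto|].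
    exists (mul (iX m) z). rewrite hmul, !mulA. reflexivity.
  - intros [r' [Hin Hx]]. apply in_map_iff in Hin. destruct Hin as [r [Er Hin]]. subst r'.
    exists r. destruct (proj2 (HR r)) as [H1 H2]. { exists r. split; auto. exists one. rewrite mul1r; auto. }
    auto.
Qed.

Lemma Tsfa : strongly_finitely_aligned (sX S) -> exists B : list P,
    (forall b, In b B -> b <> zero) /\
    (forall x, ICd x <-> (x = zero \/ exists b, In b B /\ rin b x)) /\
    (forall b b', In b B -> In b' B -> b <> b' -> forall x, rin b x -> rin b' x -> x = zero).
Proof.
  intros H. destruct (H a b) as [B [HB1 [HB2 HB3]]].
  exists (map (fun r => mul (eval l0) (iX r)) B). split; [|split].
  - intros b' Hin. apply in_map_iff in Hin. destruct Hin as [r [Er Hin]]. subst.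
    apply (Dnz l0 a Ra). auto.
  - intro x. unfold ICd. rewrite (Dcase l0 a b Ra Rb Ua Ub). split.
    + intros [y [H1 [H2 [z Ez]]]]. destruct (proj1 (HB2 y) (conj H1 H2)) as [Y|[r [Hin [m Em]]]].
      * left. subst. rewrite hzero, mul0r, mul0l. auto.
      * right. subst. exists (mul (eval l0) (iX r)). split; [apply (in_map (fun r => mul (eval l0) (iX r))); auto|].
        exists (mul (iX m) z). rewrite hmul, !mulA. reflexivity.
    + intros [X0|[r' [Hin Hx]]].
      * subst. exists zero. split; [exists zero; rewrite mul0r; auto|].
        split; [exists zero; rewrite mul0r; auto|]. exists zero. rewrite mul0r. auto.
      * apply in_map_iff in Hin. destruct Hin as [r [Er Hin]]. subst r'.
        exists r. destruct (proj2 (HB2 r)) as [H1 H2].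
        { right. exists r. split; auto. exists one. rewrite mul1r; auto. }
        auto.
  - intros b1 b2 Hin1 Hin2 Hne x H1 H2.
    apply in_map_iff in Hin1. destruct Hin1 as [r1 [Er1 Hin1]].
    apply in_map_iff in Hin2. destruct Hin2 as [r2 [Er2 Hin2]]. subst.
    destruct (dec (x = zero)) as [X0|X0]; auto. exfalso.
    destruct (Dextra l0 a Ra r1 r2 x H1 H2 X0) as [w [Hw [W1 W2]]].
    apply Hw. apply (HB3 r1 r2); auto. intro E; subst; auto.
Qed.
End T.
End GP.

Lemma HiM : forall x, iota (sinj (sM ntM) x) = iM x. Proof. reflexivity. Qed.
Lemma HiN : forall x, iota (sinj (sN ntN) x) = iN x. Proof. reflexivity. Qed.

Lemma LD l0 c : red (l0 ++ [c]) -> ~ unitL c -> forall y,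
  mul (eval (l0 ++ [c])) y = zero \/
  exists c' rest, ldiv c c' /\ red (l0 ++ c' :: rest) /\ mul (eval (l0 ++ [c])) y = eval (l0 ++ c' :: rest).
Proof.
  intros Hr Hu y. destruct c as [a|a].
  - destruct (divX (sM ntM) iM HiM l0 a Hr Hu y) as [H|[m [rest [H1 H2]]]]; [left; auto|right].
    exists (inl (mul a m)), rest. split; [exists m; auto|auto].
  - destruct (divX (sN ntN) iN HiN l0 a Hr Hu y) as [H|[m [rest [H1 H2]]]]; [left; auto|right].
    exists (inr (mul a m)), rest. split; [exists m; auto|auto].
Qed.

Lemma ldiv_iota c c' : ldiv c c' -> exists u, iota c' = mul (iota c) u.
Proof. destruct c as [a|a], c' as [a'|a']; simpl; try tauto; intros [m E]; subst;
  eexists; apply hmul. Qed.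

Lemma unit_iota c : unitL c -> exists u, mul (iota c) u = one.
Proof. destruct c as [a|a]; simpl; intros [d E].
  - exists (iM d). rewrite <- hmul, E; apply hone.
  - exists (iN d). rewrite <- hmul, E; apply hone. Qed.

Lemma strip s : s = zero \/ (forall x, rin s x) \/
  exists l0 c, red (l0 ++ [c]) /\ ~ unitL c /\ forall x, rin s x <-> rin (eval (l0 ++ [c])) x.
Proof.
  destruct (NF s) as [E|[l [Hl E]]]; [left; auto|right]. subst s.
  induction l as [|c l IH] using rev_ind.
  - left. intro x. exists x. simpl. rewrite mul1l. auto.
  - assert (Hl' : red l) by (eapply red_app_l; eauto).
    destruct (classic (unitL c)) as [Hu|Hu].
    + assert (Eq : forall x, rin (eval (l ++ [c])) x <-> rin (eval l) x).
      { intro x. rewrite eval_snoc. split.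
        - intros [y E]. exists (mul (iota c) y). rewrite E, mulA. auto.
        - intros [y E]. destruct (unit_iota c Hu) as [u Eu]. exists (mul u y).
          rewrite E, mulA, <- (mulA _ (eval l)), Eu, mul1r. auto. }
      destruct (IH Hl') as [H|[l0 [c0 [H1 [H2 H3]]]]].
      * left. intro x. apply Eq. apply H.
      * right. exists l0, c0. split; auto. split; auto. intro x. rewrite Eq. apply H3.
    + right. exists l, c. split; auto. split; auto. tauto.
Qed.

Definition ICs (s t x : P) := rin s x /\ rin t x.

Lemma pref_eval l0 c c' l1 d : ldiv c c' ->
  exists w, eval (l0 ++ c' :: l1 ++ [d]) = mul (eval (l0 ++ [c])) w.
Proof. intro H. destruct (ldiv_iota c c' H) as [u Eu]. exists (mul u (eval (l1 ++ [d]))).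
  rewrite eval_app, eval_snoc. simpl. rewrite Eu, !mulA. auto. Qed.

Lemma pref_principal s t s' t' w : (forall x, rin s x <-> rin s' x) -> (forall x, rin t x <-> rin t' x) ->
  t' = mul s' w -> forall x, ICs s t x <-> rin t x.
Proof.
  intros Es Et E x. unfold ICs. split; [tauto|]. intro H. split; auto.
  apply Es. apply Et in H. destruct H as [y Ey]. exists (mul w y). rewrite Ey, E, mulA. auto.
Qed.

Definition DM s t := exists l0 (a b : M), red (l0 ++ [inl a]) /\ red (l0 ++ [inl b]) /\
   ~ unitX a /\ ~ unitX b /\ forall x, ICs s t x <-> ICd (sM ntM) l0 a b x.
Definition DN s t := exists l0 (a b : N), red (l0 ++ [inr a]) /\ red (l0 ++ [inr b]) /\
   ~ unitX a /\ ~ unitX b /\ forall x, ICs s t x <-> ICd (sN ntN) l0 a b x.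

Lemma samecase s t l0 c d c' : red (l0 ++ [c]) -> red (l0 ++ [d]) -> ~ unitL c -> ~ unitL d ->
  ldiv c c' -> ldiv d c' ->
  (forall x, rin s x <-> rin (eval (l0 ++ [c])) x) -> (forall x, rin t x <-> rin (eval (l0 ++ [d])) x) ->
  DM s t \/ DN s t.
Proof.
  intros R1 R2 U1 U2 D1 D2 Es Et.
  destruct c as [a|a], d as [b|b], c' as [e|e]; simpl in D1, D2; try tauto.
  - left. exists l0, a, b. repeat split; auto; unfold ICs, ICd in *; simpl in *;
    [apply Es|apply Et|apply Es|apply Et]; tauto.
  - right. exists l0, a, b. repeat split; auto; unfold ICs, ICd in *; simpl in *;
    [apply Es|apply Et|apply Es|apply Et]; tauto.
Qed.

Lemma inter s t : (exists u, forall x, ICs s t x <-> rin u x) \/ DM s t \/ DN s t.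
Proof.
  assert (Z : forall x, rin zero x <-> x = zero).
  { intro x; split. - intros [y E]. rewrite mul0l in E. auto. - intro E; subst. exists zero. rewrite mul0l; auto. }
  assert (Z2 : forall u, rin u zero). { intro u. exists zero. rewrite mul0r. auto. }
  destruct (strip s) as [S0|[Sall|[l0 [c [Rc [Uc Es]]]]]].
  { left. exists zero. subst. intro x. unfold ICs. rewrite Z. split; [intros [H _]; exact H|intro E; subst; split; try reflexivity; apply Z2]. }
  { left. exists t. intro x. unfold ICs. split; [tauto|]. intro; split; auto. }
  destruct (strip t) as [T0|[Tall|[k0 [d [Rd [Ud Et]]]]]].
  { left. exists zero. subst. intro x. unfold ICs. rewrite Z. split; [intros [_ H]; exact H|intro E; subst; split; try reflexivity; apply Z2]. }
  { left. exists s. intro x. unfold ICs. split; [tauto|]. intro; split; auto. }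
  destruct (classic (exists x, x <> zero /\ ICs s t x)) as [[x [Hx0 [Hs Ht]]]|Hno].
  2: { left. exists zero. intro x. rewrite Z. split.
       - intro H. apply NNPP. intro Hx. apply Hno. exists x. auto.
       - intro E; subst. split; apply Z2. }
  apply Es in Hs. apply Et in Ht. destruct Hs as [z Ez]. destruct Ht as [z' Ez'].
  destruct (LD l0 c Rc Uc z) as [Z0|[c' [rest [Dc [Rc' Ec']]]]]. { congruence. }
  destruct (LD k0 d Rd Ud z') as [Z0|[d' [rest' [Dd [Rd' Ed']]]]]. { congruence. }
  assert (EE : l0 ++ c' :: rest = k0 ++ d' :: rest') by (apply eval_inj; auto; congruence).
  apply app_eq_app in EE. destruct EE as [l [[E1 E2]|[E1 E2]]].
  - destruct l as [|e l1].
    + rewrite app_nil_r in E1. subst l0. simpl in E2. inversion E2; subst d'.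
      right. apply (samecase s t k0 c d c'); auto.
    + simpl in E2. inversion E2; subst e. subst l0.
      destruct (pref_eval k0 d d' l1 c Dd) as [w Ew].
      left. exists s. intro x'. unfold ICs. rewrite and_comm. fold (ICs t s x').
      apply (pref_principal t s (eval (k0 ++ [d])) (eval ((k0 ++ d' :: l1) ++ [c])) w); auto.
      rewrite <- app_assoc. simpl. exact Ew.
  - destruct l as [|e l1].
    + rewrite app_nil_r in E1. subst k0. simpl in E2. inversion E2; subst d'.
      right. apply (samecase s t l0 c d c'); auto.
    + simpl in E2. inversion E2; subst e. subst k0.
      destruct (pref_eval l0 c c' l1 d Dc) as [w Ew].
      left. exists t.
      apply (pref_principal s t (eval (l0 ++ [c])) (eval ((l0 ++ c' :: l1) ++ [d])) w); auto.
      rewrite <- app_assoc. simpl. exact Ew.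
Qed.

Lemma zlcP (zM : zero_left_cancellative M) (zN : zero_left_cancellative N) : zero_left_cancellative P.
Proof.
  assert (canc : forall c u v, mul (iota c) u = mul (iota c) v -> mul (iota c) u <> zero -> u = v).
  { intros [a|a] u v; simpl.
    - apply (cancX (sM ntM) iM HiM zM).
    - apply (cancX (sN ntN) iN HiN zN). }
  intros s t r E Hn.
  destruct (NF s) as [S0|[l [_ Es]]]. { subst. rewrite mul0l in Hn. congruence. }
  subst s. induction l as [|c l IH]; simpl in *.
  - rewrite !mul1l in E. auto.
  - assert (E' : mul (iota c) (mul (eval l) t) = mul (iota c) (mul (eval l) r)) by (rewrite !mulA; auto).
    assert (Hn' : mul (iota c) (mul (eval l) t) <> zero) by (rewrite mulA; auto).
    assert (E2 : mul (eval l) t = mul (eval l) r) by (apply (canc c); auto).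
    assert (Hn2 : mul (eval l) t <> zero) by (intro Z; rewrite Z, mul0r in Hn'; auto).
    auto.
Qed.

Lemma main_all (zM : zero_left_cancellative M) (zN : zero_left_cancellative N) :
  zero_left_cancellative P /\
  (admits_lcm M -> admits_lcm N -> admits_lcm P) /\
  (finitely_aligned M -> finitely_aligned N -> finitely_aligned P) /\
  (strongly_finitely_aligned M -> strongly_finitely_aligned N ->
     strongly_finitely_aligned P).
Proof.
  split; [apply zlcP; auto|]. split; [|split].
  - intros HM HN s t.
    destruct (inter s t) as [[u Hu]|[[l0 [a [b [R1 [R2 [U1 [U2 Hx]]]]]]]|[l0 [a [b [R1 [R2 [U1 [U2 Hx]]]]]]]]].
    + exists u. exact Hu.
    + destruct (Tlcm (sM ntM) iM HiM l0 a b R1 R2 U1 U2 HM) as [r Hr]. exists r. intro x.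
      pose proof (Hx x); pose proof (Hr x); unfold ICs, rin in *; tauto.
    + destruct (Tlcm (sN ntN) iN HiN l0 a b R1 R2 U1 U2 HN) as [r Hr]. exists r. intro x.
      pose proof (Hx x); pose proof (Hr x); unfold ICs, rin in *; tauto.
  - intros HM HN s t.
    destruct (inter s t) as [[u Hu]|[[l0 [a [b [R1 [R2 [U1 [U2 Hx]]]]]]]|[l0 [a [b [R1 [R2 [U1 [U2 Hx]]]]]]]]].
    + exists [u]. intro x. rewrite (Hu x). split.
      * intro H. exists u. simpl. auto.
      * intros [r [[E|[]] H]]. subst. auto.
    + destruct (Tfa (sM ntM) iM HiM l0 a b R1 R2 U1 U2 HM) as [R HR]. exists R. intro x.
      pose proof (Hx x); pose proof (HR x); unfold ICs, rin in *; tauto.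
    + destruct (Tfa (sN ntN) iN HiN l0 a b R1 R2 U1 U2 HN) as [R HR]. exists R. intro x.
      pose proof (Hx x); pose proof (HR x); unfold ICs, rin in *; tauto.
  - intros HM HN s t.
    destruct (inter s t) as [[u Hu]|[[l0 [a [b [R1 [R2 [U1 [U2 Hx]]]]]]]|[l0 [a [b [R1 [R2 [U1 [U2 Hx]]]]]]]]].
    + destruct (dec (u = zero)) as [U0|U0].
      * exists []. split; [intros b []|]. split; [|intros b b' []].
        intro x. rewrite (Hu x). subst u. split.
        -- intros [y E]. left. rewrite E, mul0l. auto.
        -- intros [E|[b [[] _]]]. subst. exists zero. rewrite mul0l. auto.
      * exists [u]. split; [intros b [E|[]]; subst; auto|]. split.
        -- intro x. rewrite (Hu x). split.
           ++ intro H. right. exists u. simpl. auto.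
           ++ intros [E|[b [[E|[]] H]]]; subst; auto. exists zero. rewrite mul0r. auto.
        -- intros b b' [E|[]] [E'|[]] Hne. subst. congruence.
    + destruct (Tsfa (sM ntM) iM HiM l0 a b R1 R2 U1 U2 HM) as [B [HB1 [HB2 HB3]]].
      exists B. split; auto. split; auto. intro x.
      pose proof (Hx x); pose proof (HB2 x); unfold ICs, rin in *; tauto.
    + destruct (Tsfa (sN ntN) iN HiN l0 a b R1 R2 U1 U2 HN) as [B [HB1 [HB2 HB3]]].
      exists B. split; auto. split; auto. intro x.
      pose proof (Hx x); pose proof (HB2 x); unfold ICs, rin in *; tauto.
Qed.
End Main.

Theorem theorem9p5 (M N P : monoid0) (iM : hom0 M P) (iN : hom0 N P) :
  nontrivial M -> nontrivial N ->
  zero_left_cancellative M -> zero_left_cancellative N ->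
  is_coproduct0 M N P iM iN ->
  zero_left_cancellative P /\
  (admits_lcm M -> admits_lcm N -> admits_lcm P) /\
  (finitely_aligned M -> finitely_aligned N -> finitely_aligned P) /\
  (strongly_finitely_aligned M -> strongly_finitely_aligned N ->
     strongly_finitely_aligned P).
Proof.
  intros ntM ntN zM zN Hc.
  exact (main_all M N P iM iN ntM ntN Hc zM zN).
Qed.
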